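(* Let $\nu\in\mathbb{Z}_{\ge0}\cup\{\infty\}$ be a changepoint, $T\ge0$ a random sequence length, and $\tau\ge0$ the detection time of an online changepoint detector, with $\tau$ independent of $T$ conditionally on $\nu=\infty$, and $\mu_\infty:=\mathbb{E}[\tau\mid\nu=\infty]<\infty$. Let $S^{\mathrm{ARL}}(t):=P(\tau>t\mid\nu=\infty)$, let $T^*_{\max}:=\inf\{t\mid P(T\le t)=1\}$ (assumed finite), and set $$\mu^{(\mathrm{KM})}_T:=\int_0^{T^*_{\max}}S^{\mathrm{ARL}}(t)\,dt,\qquad \mu^{(\mathrm{LB})}_T:=\mathbb{E}[\tau\mid\nu=\infty,\ \tau\le T],$$ $\mathcal{B}_{\mathrm{TR}}(\hat\mu^{(\mathrm{KM})}_T):=\mu^{(\mathrm{KM})}_T-\mu_\infty$ and $\mathcal{B}_{\mathrm{TR}}(\hat\mu^{(\mathrm{LB})}_T):=\mu^{(\mathrm{LB})}_T-\mu_\infty$. Then $$\mathcal{B}_{\mathrm{TR}}(\hat\mu^{(\mathrm{LB})}_T)\le\mathcal{B}_{\mathrm{TR}}(\hat\mu^{(\mathrm{KM})}_T)\le0.$$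
   Context: Setting: a sequence $X^{(0)},X^{(1)},\dots$ has frames drawn from a pre-change density before the changepoint $\nu$ and a post-change density from $\nu$ on ($\nu=\infty$ means no change); $\nu$ and the length $T$ are independent of the observations. $\mu_\infty$ is the average run length (ARL). $\mu^{(\mathrm{KM})}_T$ is the population version of the KM-ARL estimator with upper integration limit $a=T^*_{\max}$, and $\mu^{(\mathrm{LB})}_T$ the population version of the conventional estimator averaging detection times only over sequences where detection occurs within the sequence length. *)

(* Defs.v *)
From HB Require Import structures.
From mathcomp Require Import all_boot all_order all_algebra.
From mathcomp Require Import all_classical all_reals all_analysis.
Set Implicit Arguments. Unset Strict Implicit. Unset Printing Implicit Defensive.
Import Order.TTheory GRing.Theory Num.Theory.
Local Open Scope classical_set_scope.
Local Open Scope ring_scope.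

Definition indep_rv d (Omega : measurableType d) (R : realType)
  (P : probability Omega R) (X Y : Omega -> R) : Prop :=
  forall A B : set R, measurable A -> measurable B ->
    P (X @^-1` A `&` Y @^-1` B) = (P (X @^-1` A) * P (Y @^-1` B))%E.

Definition survival d (Omega : measurableType d) (R : realType)
  (P : probability Omega R) (tau : Omega -> R) (t : R) : R :=
  fine (P [set w | t < tau w]).

Definition Tstar_max d (Omega : measurableType d) (R : realType)
  (P : probability Omega R) (Tl : Omega -> R) : R :=
  inf [set t : R | P [set w | Tl w <= t] = 1%E].

Definition mu_ARL d (Omega : measurableType d) (R : realType)
  (P : probability Omega R) (tau : Omega -> R) : \bar R :=
  (\int[P]_w (tau w)%:E)%E.

Definition mu_KM d (Omega : measurableType d) (R : realType)
  (P : probability Omega R) (tau Tl : Omega -> R) : \bar R :=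
  (\int[lebesgue_measure]_(t in `[0%R, Tstar_max P Tl]%classic) (survival P tau t)%:E)%E.

(* mu^(LB)_T := E[tau | tau <= T] = E[tau 1{tau<=T}] / P(tau <= T) *)
Definition mu_LB d (Omega : measurableType d) (R : realType)
  (P : probability Omega R) (tau Tl : Omega -> R) : \bar R :=
  ((\int[P]_(w in [set w | (tau w <= Tl w)%R]) (tau w)%:E) *
   ((fine (P [set w | (tau w <= Tl w)%R]))^-1)%:E)%E.

(* Main.v *)
Require Import Defs.
From HB Require Import structures.
From mathcomp Require Import all_boot all_order all_algebra.
From mathcomp Require Import all_classical all_reals all_analysis.
From mathcomp Require Import measurable_realfun.
From mathcomp Require Import lra.
Import Order.TTheory GRing.Theory Num.Theory.
Local Open Scope classical_set_scope.
Local Open Scope ring_scope.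

Lemma layer (d : measure_display) (Omega : measurableType d)
  (R : realType) (P : probability Omega R) (f : Omega -> R) :
  measurable_fun setT f -> (forall w, 0 <= f w) ->
  (\int[P]_w (f w)%:E =
   \int[lebesgue_measure]_(t in `[0%R, +oo[%classic) P [set w | ((t : R) < f w)%R])%E /\
  measurable_fun [set: R] (fun t : R => P [set w | t < f w] : \bar R).
Proof.
move=> mf f0.
pose X : {RV P >-> R} := mfun_Sub (mem_set mf : f \in mfun).
have hX : forall t, ccdf X t = P [set w | t < f w].
  move=> t; rewrite /ccdf /distribution /pushforward /=; congr (P _).
  by apply/seteqP; split => w /=; rewrite in_itv/= andbT.
split.
  have := @ge0_expectation_ccdf _ _ _ P X f0; rewrite expectation_def => ->.
  by apply: eq_integral => t _; rewrite hX.
have := ccdf_measurable X.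
by apply: eq_measurable_fun => t _; rewrite hX.
Qed.
Local Open Scope ereal_scope.

Lemma mpre d (Omega : measurableType d) (R : realType) (f : Omega -> R) (B : set R) :
  measurable_fun setT f -> measurable B -> measurable (f @^-1` B).
Proof. by move=> mf mB; rewrite -[_ @^-1` _]setTI; exact: mf. Qed.

Lemma mlt d (Omega : measurableType d) (R : realType) (f : Omega -> R) (t : R) :
  measurable_fun setT f -> measurable [set w | (t < f w)%R].
Proof.
move=> mf; have -> : [set w | (t < f w)%R] = f @^-1` `]t, +oo[.
  by apply/seteqP; split => w /=; rewrite in_itv/= andbT.
exact: mpre.
Qed.

Lemma mle d (Omega : measurableType d) (R : realType) (f : Omega -> R) (t : R) :
  measurable_fun setT f -> measurable [set w | (f w <= t)%R].
Proof.
move=> mf; have -> : [set w | (f w <= t)%R] = f @^-1` `]-oo, t].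
  by apply/seteqP; split => w /=; rewrite in_itv/=.
exact: mpre.
Qed.

Lemma real_meas d (Omega : measurableType d) (R : realType) (P : probability Omega R)
  (X : set Omega) : measurable X -> exists x : R, P X = x%:E /\ (0 <= x)%R.
Proof.
move=> mX; exists (fine (P X)); split; first by rewrite fineK// fin_num_measure.
by rewrite fine_ge0.
Qed.

Lemma key (d : measure_display) (Omega : measurableType d)
  (R : realType) (P : probability Omega R) (tau Tl : Omega -> R) (t : R) :
  measurable_fun setT tau -> measurable_fun setT Tl ->
  indep_rv P tau Tl ->
  P ([set w | (tau w <= Tl w)%R] `&` [set w | (t < tau w)%R]) <=
  P [set w | (tau w <= Tl w)%R] * P [set w | (t < tau w)%R].
Proof.
move=> mtau mTl ind.
set A := [set w | (tau w <= Tl w)%R].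
have mA : measurable A.
  have mt : measurable [set true] by [].
  have := measurable_fun_ler mtau mTl measurableT mt.
  by rewrite setTI; congr measurable; apply/seteqP; split => w /=.
have eS : [set w | (t < tau w)%R] = tau @^-1` `]t, +oo[.
  by apply/seteqP; split => w /=; rewrite in_itv/= andbT.
have eF : [set w | (tau w <= t)%R] = tau @^-1` `]-oo, t].
  by apply/seteqP; split => w /=; rewrite in_itv/=.
have eG : [set w | (t < Tl w)%R] = Tl @^-1` `]t, +oo[.
  by apply/seteqP; split => w /=; rewrite in_itv/= andbT.
have mS : measurable [set w | (t < tau w)%R] by rewrite eS; exact: mpre.
have mF : measurable [set w | (tau w <= t)%R] by rewrite eF; exact: mpre.
have mG : measurable [set w | (t < Tl w)%R] by rewrite eG; exact: mpre.
have SG : P ([set w | (t < tau w)%R] `&` [set w | (t < Tl w)%R]) =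
    P [set w | (t < tau w)%R] * P [set w | (t < Tl w)%R].
  by rewrite eS eG; apply: ind.
have FG : P ([set w | (tau w <= t)%R] `&` [set w | (t < Tl w)%R]) =
    P [set w | (tau w <= t)%R] * P [set w | (t < Tl w)%R].
  by rewrite eF eG; apply: ind.
have H1 : P (A `&` [set w | (t < tau w)%R]) <=
    P ([set w | (t < tau w)%R] `&` [set w | (t < Tl w)%R]).
  apply: le_measure; rewrite ?inE; [exact: measurableI|exact: measurableI|].
  by move=> w [/= h1 h2]; split => //=; exact: (lt_le_trans h2 h1).
have H2 : P ([set w | (tau w <= t)%R] `&` [set w | (t < Tl w)%R]) <=
    P (A `&` [set w | (tau w <= t)%R]).
  apply: le_measure; rewrite ?inE; [exact: measurableI|exact: measurableI|].
  by move=> w [/= h1 h2]; split => //=; rewrite /A /= (le_trans h1)// ltW.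
have HA : P A = P (A `&` [set w | (t < tau w)%R]) + P (A `&` [set w | (tau w <= t)%R]).
  rewrite -measureU; [|exact: measurableI|exact: measurableI|].
    congr (P _); apply/seteqP; split => w /=.
      by move=> Aw; have [h|h] := ltP t (tau w); [left|right].
    by case=> -[].
  apply/seteqP; split => w //= [[_ h1] [_ h2]].
  by move: (lt_le_trans h1 h2); rewrite ltxx.
have HSF : P [set w | (t < tau w)%R] + P [set w | (tau w <= t)%R] = 1.
  rewrite -measureU//; last first.
    apply/seteqP; split => w //= [h1 h2].
    by move: (lt_le_trans h1 h2); rewrite ltxx.
  rewrite -(probability_setT P); congr (P _); apply/seteqP; split => w //= _.
  by have [h|h] := ltP t (tau w); [left|right].
have mAS : measurable (A `&` [set w | (t < tau w)%R]) by exact: measurableI.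
have mAF : measurable (A `&` [set w | (tau w <= t)%R]) by exact: measurableI.
have [q [qE q0]] := @real_meas _ _ _ P _ mAS.
have [r [rE r0]] := @real_meas _ _ _ P _ mAF.
have [s [sE s0]] := @real_meas _ _ _ P _ mS.
have [f [fE f0]] := @real_meas _ _ _ P _ mF.
have [g [gE g0]] := @real_meas _ _ _ P _ mG.
move: H1 H2 HA HSF; rewrite SG FG qE rE sE fE gE => H1 H2 -> HSF.
rewrite -EFinD -!EFinM !lee_fin in H1 H2 *.
have {}HSF : (s + f = 1)%R by move: HSF; rewrite -EFinD => -[].
have h1 : (q * f <= s * g * f)%R by rewrite ler_wpM2r.
have h2 : (s * (f * g) <= s * r)%R by rewrite ler_wpM2l.
nra.
Qed.

Local Close Scope ereal_scope.

Theorem theorem4p3 (d : measure_display) (Omega : measurableType d)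
  (R : realType) (P : probability Omega R) (tau Tl : Omega -> R) :
  measurable_fun setT tau -> measurable_fun setT Tl ->
  (forall w, 0 <= tau w) -> (forall w, 0 <= Tl w) ->
  indep_rv P tau Tl ->
  P.-integrable setT (fun w => (tau w)%:E) ->
  (exists t : R, P [set w | Tl w <= t] = 1%E) ->
  (0 < P [set w | (tau w <= Tl w)%R])%E ->
  (mu_LB P tau Tl - mu_ARL P tau <= mu_KM P tau Tl - mu_ARL P tau)%E /\
  (mu_KM P tau Tl - mu_ARL P tau <= 0)%E.
Proof.
move=> mtau mTl tau0 Tl0 ind itau [t0 Ht0] pA0.
Local Open Scope ereal_scope.
set M := Tstar_max P Tl.
have [Etau mS] := @layer _ _ _ P _ mtau tau0.
set A := [set w | (tau w <= Tl w)%R].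
have mA : measurable A.
  have mt : measurable [set true] by [].
  have := measurable_fun_ler mtau mTl measurableT mt.
  by rewrite setTI; congr measurable; apply/seteqP; split => w /=.
have [p [pE p0]] := @real_meas _ _ _ P _ mA.
have pgt0 : (0 < p)%R by rewrite -lte_fin -pE.
have KME : mu_KM P tau Tl =
    \int[lebesgue_measure]_(t in `[0%R, M]%classic) P [set w | (t < tau w)%R].
  apply: eq_integral => t _; rewrite /survival fineK// fin_num_measure//.
  exact: mlt.
have KMle : mu_KM P tau Tl <= mu_ARL P tau.
  rewrite KME /mu_ARL Etau; apply: ge0_subset_integral => //.
  - exact: measurable_funS mS.
  - by move=> t /=; rewrite !in_itv/= => /andP[-> _].
have Efin : mu_ARL P tau \is a fin_num by exact: integrable_fin_num.
split; last by rewrite sube_le0.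
apply: leeB => //.
have tM : forall t, (M < t)%R -> P [set w | (t < Tl w)%R] = 0.
  move=> t Mt.
  have [s Ss st] := inf_lt (ex_intro _ t0 Ht0) Mt.
  have -> : [set w | (t < Tl w)%R] = ~` [set w | (Tl w <= t)%R].
    by apply/seteqP; split => w /=; rewrite ltNge => /negP.
  rewrite probability_setC; last first.
    exact: mle.
  suff -> : P [set w | (Tl w <= t)%R] = 1 by rewrite subee.
  apply/eqP; rewrite eq_le probability_le1 /=; last first.
    exact: mle.
  rewrite -[X in X <= _]Ss; apply: le_measure; rewrite ?inE.
  - exact: mle.
  - exact: mle.
  by move=> w /= h; rewrite (le_trans h)// ltW.
rewrite /mu_LB -/A pE /=.
set a := \int[P]_(w in A) (tau w)%:E.
have aE : a = \int[P]_w ((tau w * \1_A w)%R)%:E.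
  rewrite /a integral_mkcond; apply: eq_integral => w _; rewrite patchE indicE.
  by case: (boolP (w \in A)) => _; rewrite ?mulr1 ?mulr0.
have mf' : measurable_fun setT (fun w => tau w * \1_A w)%R.
  exact: measurable_funM mtau (measurable_indic mA).
have f'0 : forall w, (0 <= tau w * \1_A w)%R.
  by move=> w; rewrite mulr_ge0// indicE.
have [Ef' mSf'] := @layer _ _ _ P _ mf' f'0.
have abound : a <= p%:E * mu_KM P tau Tl.
  have KZ : p%:E * \int[lebesgue_measure]_(t in `[0%R, M]%classic) P [set w | (t < tau w)%R]
     = \int[lebesgue_measure]_(t in `[0%R, M]%classic) (p%:E * P [set w | (t < tau w)%R]).
    rewrite ge0_integralZl_EFin //.
    all: try (by move=> t _ /=; exact: measure_ge0).
    exact: measurable_funS mS.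
  rewrite aE Ef' KME KZ.
  apply: (@le_trans _ _ (\int[lebesgue_measure]_(t in `[0%R, +oo[)
     (((fun t => p%:E * P [set w | (t < tau w)%R]) \_ `[0%R, M]) t))).
  - apply: ge0_le_integral => //.
    + exact: measurable_funS mSf'.
    + apply: (measurable_funS measurableT) => //.
      apply/(measurable_restrictT _ _).1 => //.
      by apply: measurable_funeM; exact: measurable_funS mS.
    + move=> t; rewrite /= in_itv/= andbT => t0'; rewrite patchE.
      case: ifPn => tin.
        have -> : [set w | (t < tau w * \1_A w)%R] = A `&` [set w | (t < tau w)%R].
          apply/seteqP; split => w /=; rewrite indicE.
            by case: (boolP (w \in A)) => /=; rewrite ?mulr1 ?mulr0 ?inE// => _ h;
              move: (lt_le_trans h t0'); rewrite ltxx.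
          by move=> [Aw h]; rewrite mem_set// mulr1.
        by rewrite -pE; exact: key.
      have Mt : (M < t)%R by move: tin; rewrite notin_setE /= in_itv/= t0' /= => /negP; rewrite -ltNge.
      apply: (@le_trans _ _ (P [set w | (t < Tl w)%R])); last by rewrite tM. apply: le_measure; rewrite ?inE.
      * by rewrite -[X in measurable X]/([set w | (t < (tau \* \1_A) w)%R]); exact: mlt.
      * exact: mlt.
      move=> w /=; rewrite indicE; case: (boolP (w \in A)) => /=.
        by rewrite inE mulr1 => Aw h; exact: (lt_le_trans h Aw).
      by rewrite mulr0 => _ h; move: (lt_le_trans h t0'); rewrite ltxx.
  - rewrite [leRHS]integral_mkcond [leLHS]integral_mkcond le_eqVlt; apply/orP; left.
    apply/eqP; apply: eq_integral => t _; rewrite !patchE.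
    case: ifPn => tin; case: ifPn => //.
    move=> tin'; move: tin tin'; rewrite notin_setE in_setE /= !in_itv/= andbT => h /andP[h' _].
    by exfalso; apply: h.
rewrite (_ : mu_KM P tau Tl = p%:E * mu_KM P tau Tl * (p^-1)%:E); last first.
  by rewrite muleAC -EFinM mulfV ?gt_eqF// mul1e.
apply: lee_wpmul2r => //.
by rewrite lee_fin invr_ge0.
Qed.
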